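(* Let $\mathfrak F$ and $\mathfrak G$ be semiclosed generalized flags in $V$ and $V_*$, respectively. The following are equivalent: (1) $\mathfrak F,\mathfrak G$ form a taut couple; (2) for every $F\in\mathfrak F$ such that $F^\perp$ is a nonzero proper subspace of $V_*$, $F^\perp$ is both a union and an intersection of members of $\mathfrak G$; and for every $G\in\mathfrak G$ such that $G^\perp$ is a nonzero proper subspace of $V$, $G^\perp$ is both a union and an intersection of members of $\mathfrak F$.
   Context: $V,V_*$: countable-dimensional complex spaces with a nondegenerate pairing $\langle\cdot,\cdot\rangle$; $\mathfrak{gl}(V,V_* )=V\otimes V_*$ acts on $V$ by $(v\otimes w)u=\langle u,w\rangle v$ and on $V_*$ by $(v\otimes w)y=-\langle v,y\rangle w$. $F^\perp$ is the orthogonal complement under the pairing; $F$ is closed if $F=F^{\perp\perp}$, $\overline F:=F^{\perp\perp}$. A generalized flag in $V$ (similarly in $V_*$) is a chain $\mathfrak F$ of subspaces such that every member belongs to an immediate predecessor–successor pair $F'\subsetneq F''$ of $\mathfrak F$ (no member strictly between), and every nonzero vector $v$ lies in $F''\setminus F'$ for some pair. It is semiclosed if for each pair $F'\subset F''$ one has $\overline{F'}\in\{F',F''\}$. $\mathrm{St}_{\mathfrak F}$ is the stabilizer of $\mathfrak F$ in $\mathfrak{gl}(V,V_* )$. Semiclosed generalized flags $\mathfrak F$ in $V$ and $\mathfrak G$ in $V_*$ form a taut couple if the chain $\mathfrak F^\perp=\{F^\perp:F\in\mathfrak F\}$ is stable under $\mathrm{St}_{\mathfrak G}$ and the chain $\mathfrak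 G^\perp$ is stable under $\mathrm{St}_{\mathfrak F}$. *)

(* Defs.v *)
From HB Require Import structures.
From mathcomp Require Import all_boot all_order all_algebra.
Set Implicit Arguments. Unset Strict Implicit. Unset Printing Implicit Defensive.
Import GRing.Theory.
Local Open Scope ring_scope.

Definition subset_of (T : Type) (A B : T -> Prop) : Prop := forall x, A x -> B x.
Definition seteq (T : Type) (A B : T -> Prop) : Prop := subset_of A B /\ subset_of B A.

Definition subspace (K : fieldType) (V : lmodType K) (A : V -> Prop) : Prop :=
  A 0 /\ forall (a : K) (x y : V), A x -> A y -> A (a *: x + y).

Definition countable_dim (K : fieldType) (V : lmodType K) : Prop :=
  exists e : nat -> V, forall v : V,
    exists (n : nat) (c : nat -> K), v = \sum_(i < n) c i *: e i.

Definition nondeg_pairing (K : fieldType) (V W : lmodType K) (p : V -> W -> K) : Prop :=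
  (forall (a : K) (x y : V) (w : W), p (a *: x + y) w = a * p x w + p y w) /\
  (forall (a : K) (v : V) (x y : W), p v (a *: x + y) = a * p v x + p v y) /\
  (forall v : V, (forall w : W, p v w = 0) -> v = 0) /\
  (forall w : W, (forall v : V, p v w = 0) -> w = 0).

Definition flip_pairing (K : fieldType) (V W : lmodType K) (p : V -> W -> K) : W -> V -> K :=
  fun w v => p v w.

Definition perp (K : fieldType) (V W : lmodType K) (p : V -> W -> K) (F : V -> Prop) : W -> Prop :=
  fun w => forall v, F v -> p v w = 0.

Definition pclosure (K : fieldType) (V W : lmodType K) (p : V -> W -> K) (F : V -> Prop) : V -> Prop :=
  perp (flip_pairing p) (perp p F).

Definition imm_pair (T : Type) (fl : (T -> Prop) -> Prop) (F' F'' : T -> Prop) : Prop :=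
  fl F' /\ fl F'' /\ subset_of F' F'' /\ ~ subset_of F'' F' /\
  forall H, fl H -> subset_of F' H -> subset_of H F'' -> seteq H F' \/ seteq H F''.

Definition gen_flag (K : fieldType) (V : lmodType K) (fl : (V -> Prop) -> Prop) : Prop :=
  (forall F, fl F -> subspace F) /\
  (forall F1 F2, fl F1 -> fl F2 -> subset_of F1 F2 \/ subset_of F2 F1) /\
  (forall F, fl F -> exists F' F'', imm_pair fl F' F'' /\ (seteq F F' \/ seteq F F'')) /\
  (forall v : V, v <> 0 -> exists F' F'', imm_pair fl F' F'' /\ F'' v /\ ~ F' v).

Definition semiclosed (K : fieldType) (V W : lmodType K) (p : V -> W -> K)
    (fl : (V -> Prop) -> Prop) : Prop :=
  forall F' F'', imm_pair fl F' F'' ->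
    seteq (pclosure p F') F' \/ seteq (pclosure p F') F''.

(* Elements of gl(V,V_* ) = V (x) V_* are given by finite lists of pure tensors
   [v_i (x) w_i]; their actions on V and V_* are: *)
Definition actV (K : fieldType) (V W : lmodType K) (p : V -> W -> K)
    (s : seq (V * W)) (u : V) : V :=
  \sum_(t <- s) p u t.2 *: t.1.
Definition actW (K : fieldType) (V W : lmodType K) (p : V -> W -> K)
    (s : seq (V * W)) (y : W) : W :=
  \sum_(t <- s) (- p t.1 y) *: t.2.

Definition stableV (K : fieldType) (V W : lmodType K) (p : V -> W -> K)
    (s : seq (V * W)) (A : V -> Prop) : Prop :=
  forall u, A u -> A (actV p s u).
Definition stableW (K : fieldType) (V W : lmodType K) (p : V -> W -> K)
    (s : seq (V * W)) (B : W -> Prop) : Prop :=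
  forall y, B y -> B (actW p s y).

Definition in_StV (K : fieldType) (V W : lmodType K) (p : V -> W -> K)
    (fl : (V -> Prop) -> Prop) (s : seq (V * W)) : Prop :=
  forall F, fl F -> stableV p s F.
Definition in_StW (K : fieldType) (V W : lmodType K) (p : V -> W -> K)
    (gl : (W -> Prop) -> Prop) (s : seq (V * W)) : Prop :=
  forall G, gl G -> stableW p s G.

Definition taut_couple (K : fieldType) (V W : lmodType K) (p : V -> W -> K)
    (fl : (V -> Prop) -> Prop) (gl : (W -> Prop) -> Prop) : Prop :=
  gen_flag fl /\ semiclosed p fl /\ gen_flag gl /\ semiclosed (flip_pairing p) gl /\
  (forall s, in_StW p gl s -> forall F, fl F -> stableW p s (perp p F)) /\
  (forall s, in_StV p fl s -> forall G, gl G -> stableV p s (perp (flip_pairing p) G)).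

Definition nonzero_proper (T : zmodType) (A : T -> Prop) : Prop :=
  (exists x, A x /\ x <> 0) /\ (exists x, ~ A x).

Definition union_of_members (T : Type) (fl : (T -> Prop) -> Prop) (A : T -> Prop) : Prop :=
  exists S : (T -> Prop) -> Prop, (forall H, S H -> fl H) /\
    seteq A (fun x => exists H, S H /\ H x).
Definition inter_of_members (T : Type) (fl : (T -> Prop) -> Prop) (A : T -> Prop) : Prop :=
  exists S : (T -> Prop) -> Prop, (forall H, S H -> fl H) /\
    seteq A (fun x => forall H, S H -> H x).

(* Main.v *)
Require Import Defs.
From HB Require Import structures.
From mathcomp Require Import all_boot all_order all_algebra.
From Stdlib Require Import Classical.
Set Implicit Arguments. Unset Strict Implicit. Unset Printing Implicit Defensive.
Import GRing.Theory.
Local Open Scope ring_scope.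

Section Gen.
Variable K : fieldType.

Lemma sub_scale (B : lmodType K) (G : B -> Prop) c z :
  subspace G -> G z -> G (c *: z).
Proof. move=> [H0 HS] Gz. rewrite -[c *: z]addr0. exact: HS. Qed.

Lemma sub_unscale (B : lmodType K) (G : B -> Prop) c z :
  subspace G -> c != 0 -> G (c *: z) -> G z.
Proof.
move=> HG cn Gz. have := sub_scale c^-1 HG Gz. by rewrite scalerA mulVf // scale1r.
Qed.

Lemma q0 (A B : lmodType K) (q : A -> B -> K)
  (hq2 : forall a c x y, q a (c *: x + y) = c * q a x + q a y) a : q a 0 = 0.
Proof.
have := hq2 a 1 0 0. rewrite scaler0 addr0 mul1r => /eqP.
by rewrite -subr_eq0 opprD addrA subrr add0r oppr_eq0 => /eqP.
Qed.

Lemma perp_sub (A B : lmodType K) (q : A -> B -> K)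
  (hq2 : forall a c x y, q a (c *: x + y) = c * q a x + q a y) F :
  subspace (perp q F).
Proof.
split; first by move=> v _; exact: q0.
by move=> c x y Hx Hy v Fv; rewrite hq2 Hx // Hy // mulr0 addr0.
Qed.

Lemma flag_rel (B : lmodType K) (gl : (B -> Prop) -> Prop) (hgl : gen_flag gl)
  H' H'' G : imm_pair gl H' H'' -> gl G -> subset_of H'' G \/ subset_of G H'.
Proof.
case: hgl => _ [hch _] [g1 [g2 [_ [_ hi]]]] gG.
case: (hch _ _ g2 gG) => [|h1]; first by left.
case: (hch _ _ g1 gG) => [h2|]; last by right.
by case: (hi G gG h2 h1) => [[? ?]|[? ?]]; [right|left].
Qed.

Variables (A B : lmodType K) (q : A -> B -> K)
  (hq2 : forall a c x y, q a (c *: x + y) = c * q a x + q a y)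
  (gl : (B -> Prop) -> Prop) (hgl : gen_flag gl)
  (hgls : semiclosed (flip_pairing q) gl) (F : A -> Prop)
  (Hst : forall v z, (forall G, gl G -> forall y, G y -> G (q v y *: z)) ->
         forall y, perp q F y -> perp q F (q v y *: z)).

Lemma rank1 H' H'' v z : imm_pair gl H' H'' -> perp (flip_pairing q) H' v ->
  H'' z -> forall G, gl G -> forall y, G y -> G (q v y *: z).
Proof.
move=> hp hv hz G gG y Gy.
have sG : subspace G by case: hgl => hs _; exact: hs.
case: (flag_rel hgl hp gG) => [h|h]; first by apply: sub_scale => //; apply: h.
have e : q v y = 0 := hv y (h y Gy).
rewrite e scale0r. by case: sG.
Qed.

Lemma core H' H'' x z : imm_pair gl H' H'' -> perp q F x ->
  ~ pclosure (flip_pairing q) H' x -> H'' z -> ~ perp q F z -> False.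
Proof.
move=> hp hx hcl hz hnz. apply: hcl => v hv.
apply: NNPP => hne.
have := Hst (rank1 hp hv hz) hx.
move/(sub_unscale (perp_sub hq2 F)). by move/eqP: hne => hne /(_ hne).
Qed.

Lemma closure_sub G' : subset_of G' (perp q F) ->
  subset_of (pclosure (flip_pairing q) G') (perp q F).
Proof.
move=> hG x hx v Fv. apply: (hx v) => g Gg. exact: hG.
Qed.

Lemma lemA G' G'' x z : imm_pair gl G' G'' -> perp q F x -> ~ G' x ->
  G'' z -> ~ perp q F z -> False.
Proof.
move=> hp hx hnx hz hnz.
case: (classic (subset_of G' (perp q F))) => hsub.
  case: (hgls hp) => [[h1 h2]|[h1 h2]].
    apply: (core hp hx _ hz hnz) => /h1; exact: hnx.
  exact: hnz (closure_sub hsub (h2 z hz)).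
have [z' [hz' hnz']] : exists z', G' z' /\ ~ perp q F z'.
  apply: NNPP => hn; apply: hsub => w hw; apply: NNPP => hnw; apply: hn; by exists w.
have z'n : z' <> 0 by move=> e; apply: hnz'; rewrite e; case: (perp_sub hq2 F).
case: hgl => hs [hch [_ hv]].
have [H' [H'' [hp' [h1 h2]]]] := hv z' z'n.
have [gG' [gG'' _]] := hp.
have [gH' [gH'' [hH [_ hi]]]] := hp'.
have hH'' : subset_of H'' G'.
  case: (hch _ _ gH'' gG') => // h.
  case: (hch _ _ gH' gG') => [h3|h3]; last by move: (h3 _ hz'); tauto.
  case: (hi G' gG' h3 h) => [[a b]|[a b]] //. by move: (a _ hz'); tauto.
apply: (core hp' hx _ h1 hnz') => hc. apply: hnx.
case: (hgls hp') => [[a _]|[a _]]; apply: hH''; last exact: a.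
by apply: hH; apply: a.
Qed.

Lemma gen_main :
  (nonzero_proper (perp q F) -> union_of_members gl (perp q F)) /\
  inter_of_members gl (perp q F).
Proof.
have X0 : perp q F 0 by case: (perp_sub hq2 F).
have memb : forall y, perp q F y -> y <> 0 ->
    exists H, (gl H /\ subset_of H (perp q F)) /\ H y.
  move=> y hy yn. apply: NNPP => hn.
  case: hgl => _ [_ [_ hv]]. have [G' [G'' [hp [h1 h2]]]] := hv y yn.
  case: (classic (subset_of G'' (perp q F))) => hs.
    apply: hn; exists G''; split => //; split => //; by case: hp => _ [].
  have [z [hz hnz]] : exists z, G'' z /\ ~ perp q F z.
    apply: NNPP => hn'; apply: hs => w hw; apply: NNPP => hnw; apply: hn'; by exists w.
  exact: (lemA hp hy h2 hz hnz).
split.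
  move=> [[y0 [hy0 y0n]] _].
  exists (fun H => gl H /\ subset_of H (perp q F)); split; first by move=> H [].
  split; last by move=> x [H [[_ hs] hx]]; apply: hs.
  move=> x hx. case: (classic (x = 0)) => [->|xn]; last exact: memb.
  have [H [hH hy]] := memb y0 hy0 y0n. exists H; split => //.
  case: hH => gH _. case: hgl => hs _. by case: (hs H gH).
exists (fun H => gl H /\ subset_of (perp q F) H); split; first by move=> H [].
split; first by move=> x hx H [_ hs]; apply: hs.
move=> y hy. apply: NNPP => hny.
have yn : y <> 0 by move=> e; apply: hny; rewrite e.
case: hgl => _ [_ [_ hv]]. have [G' [G'' [hp [h1 h2]]]] := hv y yn.
case: (classic (subset_of (perp q F) G')) => hs.
  apply: h2; apply: hy; split => //; by case: hp.
have [x [hx hnx]] : exists x, perp q F x /\ ~ G' x.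
  apply: NNPP => hn'; apply: hs => w hw; apply: NNPP => hnw; apply: hn'; by exists w.
exact: (lemA hp hx hnx h1 hny).
Qed.


Lemma back_gen (C : lmodType K) (gl' : (C -> Prop) -> Prop) (X : C -> Prop)
  (f : C -> C) : X 0 -> f 0 = 0 -> (forall G, gl' G -> forall y, G y -> G (f y)) ->
  (nonzero_proper X -> union_of_members gl' X) -> forall y, X y -> X (f y).
Proof.
move=> X0 f0 st hu y hy.
case: (classic (nonzero_proper X)) => hn.
  have [S [hS [h1 h2]]] := hu hn.
  have [H [SH Hy]] := h1 y hy. apply: h2. exists H; split => //. exact: st (hS H SH) _ Hy.
case: (classic (exists x, X x /\ x <> 0)) => h.
  apply: NNPP => hf; apply: hn; split => //; by exists (f y).
have -> : y = 0 by apply: NNPP => yn; apply: h; by exists y.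
by rewrite f0.
Qed.

End Gen.

Theorem proposition3p3 (K : fieldType) (V W : lmodType K) (p : V -> W -> K)
  (hV : countable_dim V) (hW : countable_dim W) (hp : nondeg_pairing p)
  (fl : (V -> Prop) -> Prop) (gl : (W -> Prop) -> Prop)
  (hfl : gen_flag fl) (hfls : semiclosed p fl)
  (hgl : gen_flag gl) (hgls : semiclosed (flip_pairing p) gl) :
  taut_couple p fl gl <->
  ((forall F, fl F -> nonzero_proper (perp p F) ->
       union_of_members gl (perp p F) /\ inter_of_members gl (perp p F)) /\
   (forall G, gl G -> nonzero_proper (perp (flip_pairing p) G) ->
       union_of_members fl (perp (flip_pairing p) G) /\
       inter_of_members fl (perp (flip_pairing p) G))).
Proof.
have [hp1 [hp2 _]] := hp.
have hq1 : forall (a : W) c (x y : V),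
    flip_pairing p a (c *: x + y) = c * flip_pairing p a x + flip_pairing p a y.
  by move=> a c x y; rewrite /flip_pairing hp1.
have {}hp2 : forall (a : V) c (x y : W), p a (c *: x + y) = c * p a x + p a y.
  by move=> a c x y; rewrite hp2.
split.
  move=> [_ [_ [_ [_ [stW stV]]]]]. split.
    move=> F fF hn.
    suff Hst : forall v z, (forall G, gl G -> forall y, G y -> G (p v y *: z)) ->
         forall y, perp p F y -> perp p F (p v y *: z).
      have [h1 h2] := @gen_main _ V W p hp2 gl hgl hgls F Hst.
      split; [exact: h1 | exact: h2].
    move=> v z H y hy.
    have hs : in_StW p gl [:: (v, z)].
      move=> G gG x Gx. rewrite /actW big_seq1 /= scaleNr -scaleN1r.
      have sG : subspace G by case: hgl => hs _; exact: hs.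
      apply: sub_scale => //. exact: H.
    have := stW _ hs F fF y hy. rewrite /actW big_seq1 /= scaleNr -scaleN1r.
    apply: sub_unscale; first exact: perp_sub.
    by rewrite oppr_eq0 oner_eq0.
  move=> G gG hn.
  suff Hst : forall v z, (forall F, fl F -> forall y, F y -> F (flip_pairing p v y *: z)) ->
       forall y, perp (flip_pairing p) G y -> perp (flip_pairing p) G (flip_pairing p v y *: z).
    have [h1 h2] := @gen_main _ W V (flip_pairing p) hq1 fl hfl hfls G Hst.
    split; [exact: h1 | exact: h2].
  move=> v z H y hy.
  have hs : in_StV p fl [:: (z, v)].
    move=> F fF x Fx. rewrite /actV big_seq1 /=. exact: H.
  have := stV _ hs G gG y hy. by rewrite /actV big_seq1 /=.
move=> [c1 c2]. do 4 (split => //). split.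
  move=> s hs F fF. apply: back_gen.
  - by case: (perp_sub hp2 F).
  - rewrite /actW big1 // => t _. by rewrite (q0 hp2) oppr0 scale0r.
  - exact: hs.
  - by move=> hn; case: (c1 F fF hn).
move=> s hs G gG. apply: back_gen.
- by case: (perp_sub hq1 G).
- rewrite /actV big1 // => t _. have e := q0 hq1 t.2; rewrite /flip_pairing in e; by rewrite e scale0r.
- exact: hs.
- by move=> hn; case: (c2 G gG hn).
Qed.
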